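(* Let $X$ be a Cantor set with a compatible metric $d$, and let $\sigma$ be an aperiodic homeomorphism of $X$ whose minimal sets are exactly $Y_1,\dots,Y_k$ ($k<\infty$). For $i=1,\dots,k$ let $$E_i=\{x\in X:\ \text{for every }\varepsilon>0\text{ there is an }\varepsilon\text{-chain from }x\text{ to some point of }Y_i\}.$$ Then $\sigma$ is chain transitive if and only if $E_1=E_2=\dots=E_k=X$.
   Context: $\sigma$ is aperiodic if every $\sigma$-orbit is infinite. A minimal set is a nonempty closed $\sigma$-invariant set with no nonempty proper closed invariant subset. An $\varepsilon$-chain from $x$ to $y$ is a finite sequence $x_0=x,x_1,\dots,x_n=y$ with $d(\sigma(x_i),x_{i+1})<\varepsilon$ for all $i<n$. $\sigma$ is chain transitive if for all $x,y\in X$ and every $\varepsilon>0$ there is an $\varepsilon$-chain from $x$ to $y$. *)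

(* Defs.v *)
From HB Require Import structures.
From mathcomp Require Import all_boot all_order all_algebra.
From mathcomp Require Import all_classical all_reals all_analysis.
Set Implicit Arguments. Unset Strict Implicit. Unset Printing Implicit Defensive.
Import Order.TTheory GRing.Theory Num.Theory.
Local Open Scope classical_set_scope.
Local Open Scope ring_scope.

Section Dyn.
Context {R : realType} {X : metricType R}.

Definition is_homeomorphism (s : X -> X) : Prop :=
  continuous s /\ exists g : X -> X, [/\ continuous g, cancel s g & cancel g s].

(* the (two-sided) sigma-orbit of x: { s^n x : n in Z };
   y = s^(-n) x is expressed as s^n y = x *)
Definition orbit (s : X -> X) (x : X) : set X :=
  [set y | exists n : nat, iter n s x = y \/ iter n s y = x].

Definition aperiodic (s : X -> X) : Prop :=
  forall x, ~ finite_set (orbit s x).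

Definition invariant (s : X -> X) (A : set X) : Prop := s @` A = A.

Definition minimal_set (s : X -> X) (A : set X) : Prop :=
  [/\ A !=set0, closed A, invariant s A &
      forall B : set X, B `<=` A -> B !=set0 -> closed B -> invariant s B -> B = A].

Definition eps_chain (s : X -> X) (eps : R) (x y : X) : Prop :=
  exists (n : nat) (c : nat -> X),
    [/\ c 0%N = x, c n = y &
        forall i, (i < n)%N -> mdist (s (c i)) (c i.+1) < eps].

Definition chain_transitive (s : X -> X) : Prop :=
  forall x y (eps : R), 0 < eps -> eps_chain s eps x y.

Definition E_set (s : X -> X) (Y : set X) : set X :=
  [set x | forall eps : R, 0 < eps -> exists2 y, Y y & eps_chain s eps x y].

End Dyn.

(* Main.v *)
Require Import Defs.
From HB Require Import structures.
From mathcomp Require Import all_boot all_order all_algebra.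
From mathcomp Require Import all_classical all_reals all_analysis.
From mathcomp Require Import lra.
Local Open Scope classical_set_scope.
Local Open Scope ring_scope.
Import Order.TTheory GRing.Theory Num.Theory.

Section Helpers.
Context {R : realType} {X : metricType R} (s : X -> X).

Lemma chain_mono (e e' : R) x y : e <= e' -> eps_chain s e x y -> eps_chain s e' x y.
Proof.
move=> ee' [n [c [c0 cn hc]]]; exists n, c; split=> // i /hc h.
exact: lt_le_trans h ee'.
Qed.

Lemma chain_prepend (e : R) p q y : mdist (s p) q < e -> eps_chain s e q y ->
  eps_chain s e p y.
Proof.
move=> hpq [n [c [c0 cn hc]]].
exists n.+1, (fun i => if i is j.+1 then c j else p); split => //.
case=> [_|i]; first by rewrite c0.
by rewrite ltnS => /hc.
Qed.

Lemma chain_cat (e : R) x a y : eps_chain s e x a -> eps_chain s e a y ->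
  eps_chain s e x y.
Proof.
move=> [n [c [c0 cn hc]]]; elim: n x c c0 cn hc => [|n IH] x c c0 cn hc h2.
  by rewrite -c0 cn.
apply: (@chain_prepend _ _ (c 1%N)); first by rewrite -c0; apply: hc.
apply: (IH _ (fun i => c i.+1)) => // i hi; apply: hc; exact: hi.
Qed.

End Helpers.

Theorem theorem10p15 (R : realType) (X : metricType R)
  (cantorX : cantor_like X) (neX : [set: X] !=set0)
  (sigma : X -> X) (hsigma : is_homeomorphism sigma) (aper : aperiodic sigma)
  (k : nat) (Y : 'I_k -> set X)
  (hY : forall A : set X, minimal_set sigma A <-> exists i, A = Y i) :
  chain_transitive sigma <-> (forall i, E_set sigma (Y i) = [set: X]).
Proof.
split.
  move=> ct i; apply/seteqP; split=> // x _ e e0.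
  have [[y Yy] _ _ _] := (hY (Y i)).2 (ex_intro _ i erefl).
  by exists y => //; apply: ct.
move=> hE x y e e0.
have [scont [g [gcont sg gs]]] := hsigma.
pose A := [set p | forall e, 0 < e ->
  exists2 q, mdist (sigma p) q < e & eps_chain sigma e q y].
have Ach p : A p -> forall e, 0 < e -> eps_chain sigma e p y.
  by move=> Ap e' e'0; have [q h1 h2] := Ap e' e'0; exact: chain_prepend h1 h2.
have Ag p : A p -> A (g p).
  move=> Ap e' e'0; exists p; first by rewrite gs mdistxx.
  exact: Ach.
have Ay : A (g y).
  move=> e' e'0; exists y; first by rewrite gs mdistxx.
  by exists 0%N, (fun _ => y); split.
have Acl : closed A.
  rewrite closure_id; apply/seteqP; split; first exact: subset_closure.
  move=> p clp e' e'0.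
  have e20 : 0 < e' / 2 by rewrite divr_gt0.
  have nb : nbhs p (sigma @^-1` ball (sigma p) (e' / 2)).
    exact: (scont p (ball (sigma p) (e' / 2)) (nbhsx_ballx _ _ e20)).
  have [p' [Ap' hp']] := clp _ nb.
  have [q h1 h2] := Ap' _ e20.
  exists q; last by apply: chain_mono h2; lra.
  rewrite /= ballEmdist /= in hp'.
  apply: (le_lt_trans (metric_triangle _ (sigma p') _)).
  by rewrite [e']splitr ltrD.
pose F (B : set X) := [/\ B `<=` A, B !=set0, closed B & forall b, B b -> B (g b)].
have FA : F A by split => //; exists (g y).
pose P (U : set X) := F (~` U) \/ U = set0.
have [M' [PM' maxM']] : exists M', P M' /\ forall B, M' `<` B -> ~ P B.
  apply: Zorn_bigcup => Ch ChP tot.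
  case: (pselect (exists U, Ch U /\ U !=set0)) => [[U0 [ChU0 U0n]]|none]; last first.
    right; apply/seteqP; split=> // z [U ChU Uz]; apply: none; exists U; split => //.
    by exists z.
  left.
  have FU0 : F (~` U0).
    case: (ChP _ ChU0) => // U00; case: U0n => z; by rewrite U00.
  have memb U : Ch U -> [/\ closed (~` U), ~` U !=set0 & forall b, (~` U) b -> (~` U) (g b)].
    move=> ChU; case: (ChP _ ChU) => [[_ ? ? ?]|->]; first by split.
    by rewrite setC0; split => //; exact: closedT.
  rewrite setC_bigcup; split.
  - by case: FU0 => FU0A _ _ _ z hz; apply: FU0A; exact: hz U0 ChU0.
  - pose Fl := filter_from Ch (fun U => ~` U).
    have FF : Filter Fl.
      apply: filter_from_filter; first by exists U0.
      move=> i j Ci Cj; case: (tot i j Ci Cj) => h.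
        by exists j => // z jz; split => //; exact: (subsetC h).
      by exists i => // z iz; split => //; exact: (subsetC h).
    have PF : ProperFilter Fl.
      by apply: filter_from_proper => i Ci; case: (memb i Ci).
    case: cantorX => _ cmp _ _.
    have [z [_ cz]] := cmp Fl PF filterT.
    exists z => U ChU.
    case: (memb U ChU) => + _ _; rewrite closure_id => ->.
    move=> B nB; apply: cz nB; by exists U.
  - by apply: closed_bigI => U ChU; case: (memb U ChU).
  - by move=> b hb U ChU; case: (memb U ChU) => _ _; apply; exact: hb.
pose M := ~` M'.
have FM : F M.
  case: PM' => // M0.
  case: (pselect (~` A = set0)) => hA.
    have -> : M = A by rewrite /M M0 setC0 -[A]setCK hA setC0.
    exact: FA.
  exfalso; apply: (maxM' (~` A)); last by left; rewrite setCK.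
  rewrite M0; split; first exact: sub0set.
  by move=> h; apply: hA; apply/seteqP; split.
have minM B : F B -> B `<=` M -> B = M.
  move=> FB BM; case: (pselect (~` B `<=` M')) => h.
    apply/seteqP; split => // z Mz; apply: contrapT => Bz; exact: Mz (h z Bz).
  exfalso; apply: (maxM' (~` B)); last by left; rewrite setCK.
  split => //; move=> z M'z Bz; exact: BM z Bz M'z.
have sM z : M z -> M (sigma z).
  have FM'' : F (M `&` sigma @^-1` M).
    case: FM => MA [z0 Mz0] Mcl Mg; split.
    - by move=> w [Mw _]; exact: MA.
    - by exists (g z0); split; [exact: Mg | rewrite /= gs].
    - apply: closedI => //; exact: (proj1 (continuous_closedP sigma) scont).
    - by move=> b [Mb sMb]; split; [exact: Mg | rewrite /= gs].
  move=> Mz; have eqM := minM _ FM'' (@subIsetl _ _ _).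
  have : (M `&` sigma @^-1` M) z by rewrite eqM.
  by case.
have minimM : minimal_set sigma M.
  case: FM => MA Mne Mcl Mg; split => //.
    apply/seteqP; split; first by move=> _ [w Mw <-]; exact: sM.
    by move=> z Mz; exists (g z); [exact: Mg | rewrite gs].
  move=> B BM Bne Bcl Binv; apply: minM => //; split => //.
    by move=> z /BM; exact: MA.
  move=> b Bb; have : (sigma @` B) b by rewrite Binv.
  by case=> b' Bb' <-; rewrite sg.
have [i Mi] := (hY M).1 minimM.
have : E_set sigma (Y i) x by rewrite hE.
move=> /(_ e e0) [a Ya xa].
apply: chain_cat xa _; apply: Ach => //.
by case: FM => MA _ _ _; apply: MA; rewrite Mi.
Qed.
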